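(* Let $n\ge2$ and let $P=(p_{ij})$ be an $n\times n$ checkerboard copula. Then there exist indices $i<i'$ and $j<j'$ in $\{1,\dots,n\}$ such that at least one of the following holds: (i) $p_{ij}\ge n^{-2}$ and $p_{i'j'}\ge n^{-2}$; (ii) $p_{i'j}\ge n^{-2}$ and $p_{ij'}\ge n^{-2}$.
   Context: An $n\times n$ checkerboard copula is a real $n\times n$ matrix with nonnegative entries whose row and column sums all equal $\frac1n$. *)

(* Defs.v *)
From mathcomp Require Import all_boot all_order all_algebra.
Set Implicit Arguments. Unset Strict Implicit. Unset Printing Implicit Defensive.
Import Order.TTheory GRing.Theory Num.Theory.
Local Open Scope ring_scope.

Definition checkerboard_copula (R : realFieldType) (n : nat) (P : 'M[R]_n) : Prop :=
  (forall i j, 0 <= P i j) /\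
  (forall i, \sum_(j < n) P i j = (n%:R)^-1) /\
  (forall j, \sum_(i < n) P i j = (n%:R)^-1).

(* Main.v *)
Require Import Defs.
From mathcomp Require Import all_boot all_order all_algebra.
Import Order.TTheory GRing.Theory Num.Theory.
Local Open Scope ring_scope.

Theorem lemma5 (R : realFieldType) (n : nat) (P : 'M[R]_n) :
  (2 <= n)%N -> checkerboard_copula P ->
  exists (i i' j j' : 'I_n),
    [/\ (i < i')%N, (j < j')%N &
      ((((n%:R) ^+ 2)^-1 <= P i j /\ ((n%:R) ^+ 2)^-1 <= P i' j') \/
       (((n%:R) ^+ 2)^-1 <= P i' j /\ ((n%:R) ^+ 2)^-1 <= P i j'))].
Proof.
move=> n2 [P0 [Prow Pcol]].
set c := ((n%:R : R) ^+ 2)^-1.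
have nz : (n%:R : R) != 0 by rewrite pnatr_eq0 -lt0n; apply: leq_trans n2.
have nc : (n%:R : R) * c = (n%:R)^-1.
  by rewrite /c expr2 invfM mulrA divff // mul1r.
have n0 : (0 < #|'I_n|)%N by rewrite card_ord; apply: leq_trans n2.
have hT : has xpredT (index_enum 'I_n).
  have j0 : 'I_n by exists 0%N; apply: leq_trans n2.
  by apply/hasP; exists j0; rewrite ?mem_index_enum.
have rowL i : exists j, c <= P i j.
  case: (pickP (fun j => c <= P i j)) => [j Hj|H]; first by exists j.
  have : \sum_(j < n) P i j < \sum_(j < n) c.
    apply: ltr_sum => // j; by rewrite ltNge H.
  by rewrite Prow sumr_const card_ord -[c *+ n]mulr_natl nc ltxx.
have colL j : exists i, c <= P i j.
  case: (pickP (fun i => c <= P i j)) => [i Hi|H]; first by exists i.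
  have : \sum_(i < n) P i j < \sum_(i < n) c.
    apply: ltr_sum => // x; by rewrite ltNge H.
  by rewrite Pcol sumr_const card_ord -[c *+ n]mulr_natl nc ltxx.
have key a b a' b' : a != a' -> b != b' -> c <= P a b -> c <= P a' b' ->
  exists (i i' j j' : 'I_n),
    [/\ (i < i')%N, (j < j')%N &
      ((c <= P i j /\ c <= P i' j') \/ (c <= P i' j /\ c <= P i j'))].
  move=> haa hbb h1 h2.
  case: (ltngtP a a') => ha; last by move: haa; rewrite (val_inj ha) eqxx.
  - case: (ltngtP b b') => hb; last by move: hbb; rewrite (val_inj hb) eqxx.
    + by exists a, a', b, b'; split => //; left.
    + by exists a, a', b', b; split => //; right.
  - case: (ltngtP b b') => hb; last by move: hbb; rewrite (val_inj hb) eqxx.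
    + by exists a', a, b, b'; split => //; right.
    + by exists a', a, b', b; split => //; left.
pose i0 : 'I_n := Ordinal (leq_trans (isT : (0 < 2)%N) n2).
pose i1 : 'I_n := Ordinal n2.
have i01 : i0 != i1 by [].
have [j0 h0] := rowL i0; have [j1 h1] := rowL i1.
case: (eqVneq j0 j1) => hj; last by apply: (key i0 j0 i1 j1).
subst j1.
pose k := if j0 == i0 then i1 else i0.
have hk : k != j0.
  by rewrite /k; case: ifP => [/eqP->|/negbT]; rewrite eq_sym.
have [r hr] := colL k.
case: (eqVneq r i0) => hri.
  subst r; by apply: (key i0 k i1 j0).
by apply: (key r k i0 j0).
Qed.
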